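(* For every integer $n\ge4$ there is an antiprismatic octahedron $AP_{3,4}^n$ in hyperbolic space: there is a compact regular octahedron $Q$, concentric with the $n$-akis truncated octahedron $KP_{3,4}^n$ which tiles $\mathbb{H}^3$ and lying inside it with its faces parallel to the hexagonal faces of $KP_{3,4}^n$, such that the regular antiprisms attached to the faces of $Q$ are symmetric with respect to the reflection-rotations at the hexagonal faces of $KP_{3,4}^n$.
   Context: $KP_{3,4}^n$ is a hyperbolic truncated octahedron (regular square and hexagonal faces) with pyramids $PY_4^n$ (regular square base, dihedral angle $2\pi/n$ between adjacent triangular sides, rotationally symmetric) glued to its square faces, with dimensions chosen so that $\alpha+2\beta+2\gamma=2\pi$ ($\alpha$: angle between hexagonal faces, $\beta$: between square and hexagonal faces, $\gamma$: between base and side of the pyramid); it is then a fundamental domain for the group $R_{3,4}^n$ generated by reflection-rotations: reflection in the plane of a hexagonal face followed by rotation by $\pi/3$ about the axis perpendicular through the center of that face. A regular antiprism over a face $F$ of $Q$ has $F$ as bottom, a top triangle $F'$, and lateral faces which are equilateral triangles with all edges of the same length as the edges of $F$; ''symmetric'' means $F'$ is the image of $F$ under the reflection-rotation at the corresponding hexagonal face. The antiprismatic octahedron $AP_{3,4}^n$ is the union of the images of the lateral triangles under $R_{3,4}^n$. *)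

(* Defs.v *)
From Stdlib Require Import Reals Lra List Permutation.
Open Scope R_scope.

Record pt := mkpt { c0 : R; c1 : R; c2 : R; c3 : R }.

Definition mink (x y : pt) : R :=
  - c0 x * c0 y + c1 x * c1 y + c2 x * c2 y + c3 x * c3 y.

Definition vadd (x y : pt) : pt :=
  mkpt (c0 x + c0 y) (c1 x + c1 y) (c2 x + c2 y) (c3 x + c3 y).
Definition vscale (k : R) (x : pt) : pt :=
  mkpt (k * c0 x) (k * c1 x) (k * c2 x) (k * c3 x).

Definition inH3 (x : pt) : Prop := mink x x = -1 /\ 0 < c0 x.

Definition origin : pt := mkpt 1 0 0 0.

Definition arcosh (u : R) : R := ln (u + sqrt (u * u - 1)).
Definition hdist (x y : pt) : R := arcosh (- mink x y).

Definition refl (n x : pt) : pt :=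
  vadd x (vscale (- (2 * mink x n / mink n n)) n).

(** Rotation by angle th about the geodesic through [origin] with (Euclidean
    unit) spatial direction (d1,d2,d3): Rodrigues' formula on the spatial part. *)
Definition rot (d1 d2 d3 th : R) (x : pt) : pt :=
  let v1 := c1 x in let v2 := c2 x in let v3 := c3 x in
  let dv := d1 * v1 + d2 * v2 + d3 * v3 in
  let w1 := d2 * v3 - d3 * v2 in
  let w2 := d3 * v1 - d1 * v3 in
  let w3 := d1 * v2 - d2 * v1 in
  mkpt (c0 x)
    (cos th * v1 + sin th * w1 + (1 - cos th) * dv * d1)
    (cos th * v2 + sin th * w2 + (1 - cos th) * dv * d2)
    (cos th * v3 + sin th * w3 + (1 - cos th) * dv * d3).

(** Interior dihedral angle between two faces of a convex polyhedron with
    outward normals n1, n2 (spacelike):  cos = - <n1,n2> / (|n1| |n2|). *)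
Definition dihedral (n1 n2 : pt) : R :=
  acos (- mink n1 n2 / sqrt (mink n1 n1 * mink n2 n2)).

Definition opp (n : pt) : pt := vscale (-1) n.

Definition is_sign (s : R) : Prop := s = 1 \/ s = -1.

(** The regular hyperbolic truncated octahedron centred at [origin], of
    size parameter p > 0: its 24 vertices are (tp, signed permutations of
    (0,p,2p)) with tp = sqrt(1+5p^2); all its edges have the same length
    and its square and hexagonal faces are regular. *)
Definition tp (p : R) : R := sqrt (1 + 5 * p ^ 2).

Definition hexN (p s1 s2 s3 : R) : pt := mkpt (3 * p / tp p) s1 s2 s3.
Definition sqN3 (p : R) : pt := mkpt (2 * p / tp p) 0 0 1.

Definition inTO (p : R) (x : pt) : Prop :=
  inH3 x /\
  Rabs (c1 x) <= 2 * p / tp p * c0 x /\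
  Rabs (c2 x) <= 2 * p / tp p * c0 x /\
  Rabs (c3 x) <= 2 * p / tp p * c0 x /\
  (forall s1 s2 s3, is_sign s1 -> is_sign s2 -> is_sign s3 ->
     mink x (hexN p s1 s2 s3) <= 0).

Definition alphaTO (p : R) : R := dihedral (hexN p 1 1 1) (hexN p 1 1 (-1)).
Definition betaTO (p : R) : R := dihedral (hexN p 1 1 1) (sqN3 p).

(** Vertices of the square face +e3: (tp, ±p, 0, 2p), (tp, 0, ±p, 2p);
    its centre lies on the ray through (tp,0,0,2p). *)
Definition sqV1 (p : R) : pt := mkpt (tp p) p 0 (2 * p).
Definition sqCentreDir (p : R) : pt := mkpt (tp p) 0 0 (2 * p).

(** The rotationally symmetric pyramid glued on the square face +e3.  Its
    four lateral planes are the images under the symmetries of the square of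
    the plane with normal (a,b,b,c), which contains the edge
    (tp,p,0,2p)-(tp,0,p,2p).
    The apex is the (projective) common point of these planes, (c,0,0,a);
    it may be a finite, ideal or hyperideal point; it must lie on the ray
    from the centre through the square face, beyond that face. *)
Definition sideN (a b c e1 e2 : R) : pt := mkpt a (e1 * b) (e2 * b) c.

Definition inPyr3 (p a b c : R) (y : pt) : Prop :=
  inH3 y /\ 0 <= mink y (sqN3 p) /\
  (forall e1 e2, is_sign e1 -> is_sign e2 -> mink y (sideN a b c e1 e2) <= 0).

(** Moving the square face (axis i, sign sg) to the square face +e3. *)
Definition frame (i : nat) (sg : R) (x : pt) : pt :=
  match i with
  | 1%nat => mkpt (c0 x) (c2 x) (c3 x) (sg * c1 x)
  | 2%nat => mkpt (c0 x) (c3 x) (c1 x) (sg * c2 x)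
  | _ => mkpt (c0 x) (c1 x) (c2 x) (sg * c3 x)
  end.

Definition inKP (p a b c : R) (x : pt) : Prop :=
  inTO p x \/
  exists i sg, (i = 1 \/ i = 2 \/ i = 3)%nat /\ is_sign sg /\
               inPyr3 p a b c (frame i sg x).

Definition gammaPY (p a b c : R) : R := dihedral (opp (sqN3 p)) (sideN a b c 1 1).

Definition isKP (n : nat) (p a b c : R) : Prop :=
  0 < p /\
  (* the lateral plane contains the square edge (tp,p,0,2p)-(tp,0,p,2p) *)
  mink (sqV1 p) (sideN a b c 1 1) = 0 /\
  0 < mink (sideN a b c 1 1) (sideN a b c 1 1) /\
  (* the normal is outward: the centre of the base is on the inner side *)
  mink (sqCentreDir p) (sideN a b c 1 1) < 0 /\
  (* the apex (c,0,0,a) lies on the ray through the square face, beyond it *)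
  0 < c /\ 2 * p / tp p * c < a /\
  dihedral (sideN a b c 1 1) (sideN a b c (-1) 1) = 2 * PI / INR n /\
  alphaTO p + 2 * betaTO p + 2 * gammaPY p a b c = 2 * PI.

Definition reflrot (p s1 s2 s3 : R) (x : pt) : pt :=
  rot (s1 / sqrt 3) (s2 / sqrt 3) (s3 / sqrt 3) (PI / 3) (refl (hexN p s1 s2 s3) x).

(** Regular octahedron centred at [origin] with vertices on the coordinate
    axes at distance r (so its faces are parallel to the hexagonal faces of
    KP, i.e. perpendicular to the axes (±1,±1,±1)).  Region = hyperbolic
    convex hull of the 6 vertices (cosh r, ± sinh r e_i). *)
Definition inQ (r : R) (x : pt) : Prop :=
  inH3 x /\ Rabs (c1 x) + Rabs (c2 x) + Rabs (c3 x) <= tanh r * c0 x.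

Definition qv1 (r s1 : R) : pt := mkpt (cosh r) (s1 * sinh r) 0 0.
Definition qv2 (r s2 : R) : pt := mkpt (cosh r) 0 (s2 * sinh r) 0.
Definition qv3 (r s3 : R) : pt := mkpt (cosh r) 0 0 (s3 * sinh r).

(** (a1,a2,a3) bottom, (b1,b2,b3) top of a regular antiprism, listed so that
    the lateral band is the zig-zag a1 b1 a2 b2 a3 b3: all 12 edges
    (3 bottom, 3 top, 6 lateral) have the same positive length. *)
Definition zigzag (a1 a2 a3 b1 b2 b3 : pt) : Prop :=
  let s := hdist a1 a2 in
  0 < s /\
  hdist a2 a3 = s /\ hdist a3 a1 = s /\
  hdist b1 b2 = s /\ hdist b2 b3 = s /\ hdist b3 b1 = s /\
  hdist a1 b1 = s /\ hdist b1 a2 = s /\ hdist a2 b2 = s /\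
  hdist b2 a3 = s /\ hdist a3 b3 = s /\ hdist b3 a1 = s.

Definition regular_antiprism (v1 v2 v3 w1 w2 w3 : pt) : Prop :=
  exists a1 a2 a3 b1 b2 b3,
    Permutation (v1 :: v2 :: v3 :: nil) (a1 :: a2 :: a3 :: nil) /\
    Permutation (w1 :: w2 :: w3 :: nil) (b1 :: b2 :: b3 :: nil) /\
    zigzag a1 a2 a3 b1 b2 b3.

(* Main.v *)
Require Import Defs.
From Stdlib Require Import Reals Lra List Permutation.
Open Scope R_scope.


Lemma rot_formula (s1 s2 s3 v0 v1 v2 v3 : R) :
  s1*s1 = 1 -> s2*s2=1 -> s3*s3=1 ->
  rot (s1 / sqrt 3) (s2 / sqrt 3) (s3 / sqrt 3) (PI / 3) (mkpt v0 v1 v2 v3) =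
  let dv := s1*v1+s2*v2+s3*v3 in
  mkpt v0
   (v1/2 + (s2*v3 - s3*v2)/2 + dv*s1/6)
   (v2/2 + (s3*v1 - s1*v3)/2 + dv*s2/6)
   (v3/2 + (s1*v2 - s2*v1)/2 + dv*s3/6).
Proof.
  intros h1 h2 h3. unfold rot; simpl. rewrite cos_PI3, sin_PI3.
  assert (hz : sqrt 3 * sqrt 3 = 3) by (apply sqrt_sqrt; lra).
  assert (hz0 : sqrt 3 <> 0) by (intro e; rewrite e in hz; lra).
  f_equal; field_simplify; auto.
all: assert (hz2 : sqrt 3 ^ 2 = 3) by (apply pow2_sqrt; lra); rewrite hz2; field.
Qed.

Definition rotF (s1 s2 s3 v0 v1 v2 v3 : R) : pt :=
  let dv := s1*v1+s2*v2+s3*v3 in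
  mkpt v0
   (v1/2 + (s2*v3 - s3*v2)/2 + dv*s1/6)
   (v2/2 + (s3*v1 - s1*v3)/2 + dv*s2/6)
   (v3/2 + (s1*v2 - s2*v1)/2 + dv*s3/6).

Lemma arcosh_pos u : 1 < u -> 0 < arcosh u.
Proof.
  intro h. unfold arcosh. rewrite <- ln_1. apply ln_increasing. lra.
  assert (0 <= sqrt (u*u-1)) by apply sqrt_pos. lra.
Qed.

Lemma hd2 (x y u v : pt) (C : R) : mink x y = -(C*C) -> mink u v = -(C*C) -> hdist x y = hdist u v.
Proof. intros h h'. unfold hdist. rewrite h, h'. reflexivity. Qed.

Ltac sm C S k m K0 := unfold rotF, mink; simpl;
    first [ field
          | match goal with |- ?L = _ => assert (E : L + C * C = k * (S - C * m) + 2 * S * S / 3) by field; lra end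
          | match goal with |- ?L = _ => assert (E : L + C * C = k * (k * (3 - m * m) + 2 * (S - C * m))) by field; rewrite K0 in E; lra end ].

Lemma core (C S k m s1 s2 s3 : R) :
  is_sign s1 -> is_sign s2 -> is_sign s3 ->
  k*(3-m*m) = -2*(S-C*m) -> k*(S-C*m) = -2*S*S/3 -> 1 < C*C ->
  regular_antiprism (mkpt C (s1*S) 0 0) (mkpt C 0 (s2*S) 0) (mkpt C 0 0 (s3*S))
    (rotF s1 s2 s3 (C+k*m) (s1*S + k*s1) (k*s2) (k*s3))
    (rotF s1 s2 s3 (C+k*m) (k*s1) (s2*S + k*s2) (k*s3))
    (rotF s1 s2 s3 (C+k*m) (k*s1) (k*s2) (s3*S + k*s3)).
Proof.
  intros hs1 hs2 hs3 K0 K1 HC.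
  assert (H12 : forall a b, hdist (mkpt C a 0 0) (mkpt C 0 b 0) = arcosh (C*C)).
  { intros. unfold hdist. f_equal. unfold mink; simpl; ring. }
  unfold regular_antiprism.
  destruct hs1 as [-> | ->]; destruct hs2 as [-> | ->]; destruct hs3 as [-> | ->].
  all: try (do 6 eexists; split; [apply Permutation_refl|]; split; [apply Permutation_refl|];
     unfold zigzag; cbv zeta; rewrite H12; split; [apply arcosh_pos; exact HC|];
     rewrite <- (H12 1 1);
     repeat split; apply (hd2 _ _ _ _ C); sm C S k m K0; fail).
  all: do 6 eexists; split; [apply Permutation_refl|]; split; [match goal with |- Permutation (?x :: ?l) _ => apply (Permutation_cons_append l x) end|].
  all: unfold zigzag; cbv zeta; simpl app; rewrite H12; split; [apply arcosh_pos; exact HC|].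
  all: rewrite <- (H12 1 1).
  all: repeat split; apply (hd2 _ _ _ _ C). all: try (sm C S k m K0).
Qed.

Definition mm (p : R) : R := 3 * p / tp p.
Definition kk (p r : R) : R :=
  -(2 * (sinh r - cosh r * mm p) / (3 - mm p * mm p)).

Lemma refl_gen (p s1 s2 s3 : R) (x : pt) (u w : R) :
  mink x (hexN p s1 s2 s3) = u -> mink (hexN p s1 s2 s3) (hexN p s1 s2 s3) = w ->
  refl (hexN p s1 s2 s3) x =
  mkpt (c0 x + (-(2*u/w)) * mm p) (Defs.c1 x + (-(2*u/w)) * s1)
       (c2 x + (-(2*u/w)) * s2) (c3 x + (-(2*u/w)) * s3).
Proof. intros e1 e2. unfold refl. rewrite e1, e2. reflexivity. Qed.

Lemma NN p s1 s2 s3 : s1*s1 = 1 -> s2*s2=1 -> s3*s3=1 ->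
  mink (hexN p s1 s2 s3) (hexN p s1 s2 s3) = 3 - mm p * mm p.
Proof. intros h1 h2 h3. unfold mink, hexN, mm; simpl. rewrite h1, h2, h3. ring. Qed.

Lemma reflrot1 p r s1 s2 s3 : s1*s1 = 1 -> s2*s2=1 -> s3*s3=1 ->
  reflrot p s1 s2 s3 (qv1 r s1) =
  rotF s1 s2 s3 (cosh r + kk p r * mm p) (s1 * sinh r + kk p r * s1) (kk p r * s2) (kk p r * s3).
Proof.
  intros h1 h2 h3. unfold reflrot.
  rewrite (refl_gen p s1 s2 s3 _ (sinh r - cosh r * mm p) (3 - mm p * mm p)).
  - simpl. change (-(2*(sinh r - cosh r*mm p)/(3 - mm p*mm p))) with (kk p r). rewrite rot_formula by assumption. unfold rotF; cbv zeta; f_equal; field.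
  - unfold mink, hexN, qv1, mm; simpl. transitivity (-(cosh r * (3*p/tp p)) + sinh r * (s1*s1)); [ring| rewrite h1; ring].
  - apply NN; assumption.
Qed.

Lemma reflrot2 p r s1 s2 s3 : s1*s1 = 1 -> s2*s2=1 -> s3*s3=1 ->
  reflrot p s1 s2 s3 (qv2 r s2) =
  rotF s1 s2 s3 (cosh r + kk p r * mm p) (kk p r * s1) (s2 * sinh r + kk p r * s2) (kk p r * s3).
Proof.
  intros h1 h2 h3. unfold reflrot.
  rewrite (refl_gen p s1 s2 s3 _ (sinh r - cosh r * mm p) (3 - mm p * mm p)).
  - simpl. change (-(2*(sinh r - cosh r*mm p)/(3 - mm p*mm p))) with (kk p r). rewrite rot_formula by assumption. unfold rotF; cbv zeta; f_equal; field.
  - unfold mink, hexN, qv2, mm; simpl. transitivity (-(cosh r * (3*p/tp p)) + sinh r * (s2*s2)); [ring| rewrite h2; ring].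
  - apply NN; assumption.
Qed.

Lemma reflrot3 p r s1 s2 s3 : s1*s1 = 1 -> s2*s2=1 -> s3*s3=1 ->
  reflrot p s1 s2 s3 (qv3 r s3) =
  rotF s1 s2 s3 (cosh r + kk p r * mm p) (kk p r * s1) (kk p r * s2) (s3 * sinh r + kk p r * s3).
Proof.
  intros h1 h2 h3. unfold reflrot.
  rewrite (refl_gen p s1 s2 s3 _ (sinh r - cosh r * mm p) (3 - mm p * mm p)).
  - simpl. change (-(2*(sinh r - cosh r*mm p)/(3 - mm p*mm p))) with (kk p r). rewrite rot_formula by assumption. unfold rotF; cbv zeta; f_equal; field.
  - unfold mink, hexN, qv3, mm; simpl. transitivity (-(cosh r * (3*p/tp p)) + sinh r * (s3*s3)); [ring| rewrite h3; ring].
  - apply NN; assumption.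
Qed.

Lemma sign_sq s : is_sign s -> s * s = 1.
Proof. intros [-> | ->]; ring. Qed.

Lemma cosh_sinh_ln (C S : R) : C*C - S*S = 1 -> 0 < C + S ->
  cosh (ln (C+S)) = C /\ sinh (ln (C+S)) = S.
Proof.
  intros h hp.
  assert (e : exp (- ln (C+S)) = C - S).
  { rewrite exp_Ropp, exp_ln by exact hp. field_simplify_eq. lra. lra. }
  unfold cosh, sinh. rewrite e, exp_ln by exact hp. split; field.
Qed.

Theorem mainTheorem13 :
  forall (n : nat) (p a b c : R),
    (4 <= n)%nat ->
    isKP n p a b c ->
    exists r : R,
      0 < r /\
      (forall x, inQ r x -> inKP p a b c x) /\
      (forall s1 s2 s3, is_sign s1 -> is_sign s2 -> is_sign s3 ->
         regular_antiprism
           (qv1 r s1) (qv2 r s2) (qv3 r s3)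
           (reflrot p s1 s2 s3 (qv1 r s1))
           (reflrot p s1 s2 s3 (qv2 r s2))
           (reflrot p s1 s2 s3 (qv3 r s3))).
Proof.
  intros n p a b c Hn HK. destruct HK as [Hp _].
  assert (ht2 : tp p * tp p = 1 + 5 * (p*p)).
  { unfold tp. rewrite sqrt_sqrt. ring. nra. }
  assert (ht0 : 0 < tp p) by (unfold tp; apply sqrt_lt_R0; nra).
  set (t := tp p) in *.
  set (q := sqrt (1 + 2 * (p*p))).
  assert (hq2 : q * q = 1 + 2 * (p*p)) by (unfold q; rewrite sqrt_sqrt; nra).
  assert (hq0 : 0 < q) by (unfold q; apply sqrt_lt_R0; nra).
  assert (ht2p : 2 * p < t) by nra.
  assert (hqp : p < q) by nra.
  assert (htq : t <= 2 * q) by nra.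
  set (T := 3 * p / (t + q)).
  assert (hT0 : 0 < T) by (unfold T; apply Rdiv_lt_0_compat; lra).
  assert (hTe : T * (t + q) = 3 * p) by (unfold T; field; lra).
  assert (hT1 : T < 1) by nra.
  assert (hT2 : T <= 2 * p / t).
  { assert (E : 2 * p / t - T = p * (2 * q - t) / (t * (t + q))) by (unfold T; field; lra).
    assert (0 <= p * (2 * q - t) / (t * (t + q))).
    { unfold Rdiv; apply Rmult_le_pos; [nra| apply Rlt_le, Rinv_0_lt_compat; nra]. }
    lra. }
  set (D := sqrt (1 - T * T)).
  assert (hD2 : D * D = 1 - T * T) by (unfold D; rewrite sqrt_sqrt; nra).
  assert (hD0 : 0 < D) by (unfold D; apply sqrt_lt_R0; nra).
  set (C := / D).
  set (S := T * C).
  assert (hC0 : 0 < C) by (unfold C; apply Rinv_0_lt_compat; exact hD0).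
  assert (hS0 : 0 < S) by (unfold S; nra).
  assert (hCS : C * C - S * S = 1).
  { unfold S, C. replace (/ D * / D - T * / D * (T * / D)) with ((1 - T*T) / (D*D)) by (field; lra).
    rewrite hD2. field. nra. }
  destruct (cosh_sinh_ln C S hCS ltac:(lra)) as [hch hsh].
  set (r := ln (C + S)) in *.
  exists r.
  assert (hC1 : 1 < C * C) by nra.
  split.
  { unfold r. rewrite <- ln_1. apply ln_increasing. lra. nra. }
  assert (hmm : mm p = 3 * p / t) by reflexivity.
  assert (hm : 3 - mm p * mm p = 3 * (q * q) / (t * t)).
  { rewrite hmm. assert (E : 3 - 3*p/t * (3*p/t) - 3 * (q*q) / (t*t) = (3 * (t*t) - 9 * (p*p) - 3 * (q*q)) / (t*t)) by (field; lra).
    assert (E2 : 3 * (t*t) - 9 * (p*p) - 3 * (q*q) = 0) by lra.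
    rewrite E2 in E. unfold Rdiv at 4 in E. rewrite Rmult_0_l in E. lra. }
  assert (hm3 : 0 < 3 - mm p * mm p).
  { rewrite hm. apply Rdiv_lt_0_compat; nra. }
  assert (hTm : T - mm p = - (q * T / t)) by (rewrite hmm; unfold T; field; lra).
  assert (hTlm : T < mm p).
  { rewrite hmm. assert (2 * p / t < 3 * p / t). { unfold Rdiv. apply Rmult_lt_compat_r. apply Rinv_0_lt_compat; lra. lra. } lra. }
  split.
  - intros x [[hx hx0] hQ]. left.
    assert (hth : tanh r = T) by (unfold tanh; rewrite hch, hsh; unfold S; field; lra).
    rewrite hth in hQ.
    assert (hTx : T * c0 x <= 2 * p / t * c0 x) by (apply Rmult_le_compat_r; lra).
    assert (hTx3 : T * c0 x <= 3 * p / t * c0 x).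
    { apply Rmult_le_compat_r; [lra|]. rewrite <- hmm. lra. }
    pose proof (Rabs_pos (Defs.c1 x)). pose proof (Rabs_pos (c2 x)). pose proof (Rabs_pos (c3 x)).
    unfold inTO; fold t. split; [split; assumption|].
    split; [lra|]. split; [lra|]. split; [lra|].
    intros s1 s2 s3 hs1 hs2 hs3.
    assert (a1 : s1 * Defs.c1 x <= Rabs (Defs.c1 x)).
    { destruct hs1 as [-> | ->]. rewrite Rmult_1_l; apply Rle_abs.
      rewrite <- Rabs_Ropp. replace (-1 * Defs.c1 x) with (- Defs.c1 x) by ring. apply Rle_abs. }
    assert (a2 : s2 * c2 x <= Rabs (c2 x)).
    { destruct hs2 as [-> | ->]. rewrite Rmult_1_l; apply Rle_abs.
      rewrite <- Rabs_Ropp. replace (-1 * c2 x) with (- c2 x) by ring. apply Rle_abs. }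
    assert (a3 : s3 * c3 x <= Rabs (c3 x)).
    { destruct hs3 as [-> | ->]. rewrite Rmult_1_l; apply Rle_abs.
      rewrite <- Rabs_Ropp. replace (-1 * c3 x) with (- c3 x) by ring. apply Rle_abs. }
    unfold mink, hexN; simpl. fold t. lra.
  - intros s1 s2 s3 hs1 hs2 hs3.
    pose proof (sign_sq _ hs1). pose proof (sign_sq _ hs2). pose proof (sign_sq _ hs3).
    rewrite reflrot1, reflrot2, reflrot3 by assumption.
    unfold qv1, qv2, qv3. rewrite hch, hsh.
    assert (hkey : (S - C * mm p) * (S - C * mm p) = S * S * (3 - mm p * mm p) / 3).
    { replace (S - C * mm p) with (C * (T - mm p)) by (unfold S; ring).
      rewrite hTm, hm. unfold S. field. lra. }
    assert (K0 : kk p r * (3 - mm p * mm p) = -2 * (S - C * mm p)).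
    { unfold kk. rewrite hch, hsh. field. lra. }
    assert (K1 : kk p r * (S - C * mm p) = -2 * S * S / 3).
    { unfold kk. rewrite hch, hsh.
      replace (- (2 * (S - C * mm p) / (3 - mm p * mm p)) * (S - C * mm p))
        with (-2 * ((S - C * mm p) * (S - C * mm p)) / (3 - mm p * mm p)) by (field; lra).
      rewrite hkey. field. lra. }
    apply core; assumption.
Qed.
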